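(* Let $a>c$, let $\mathbf V'\subset\mathbf V$ be nonempty, and let $g:\mathbf V'\to\mathbb R$ satisfy $g(x)-g(y)\le S_a(y,x)$ for all $x,y\in\mathbf V'$. Then the function $$v(x)=\begin{cases}g(x), & x\in\mathbf V',\\ \min\{g(y)+S_a(y,x):y\in\mathbf V'\}, & x\notin\mathbf V',\end{cases}$$ is the unique function on $\mathbf V$ that solves $(DFE_a)$ at every $x\in\mathbf V\setminus\mathbf V'$ and agrees with $g$ on $\mathbf V'$; moreover $v$ is a subsolution of $(DFE_a)$ on all of $\mathbf V$.
   Context: Network $\Gamma$ (finite arcs $\mathcal E$ closed under inversion, vertices $\mathbf V$, connected), Hamiltonians $H_\gamma$ continuous, coercive, quasiconvex with $\mathrm{Int}\{H_\gamma(s,\cdot)\le b\}=\{H_\gamma(s,\cdot)<b\}$, $H_{\tilde\gamma}(s,p)=H_\gamma(1-s,-p)$; $a_0$ = max of $\max_s\min_pH_\gamma$ over non-closed arcs and of $c_\gamma$ (least level admitting a periodic viscosity subsolution) over closed arcs, with $\min_pH_\gamma(s,p)$ constant in $s$ whenever $\max_s\min_pH_\gamma=a_0$. Graph $\mathbf X=(\mathbf V,\mathbf E)$, bijection $\Psi:\mathbf E\to\mathcal E$, $\mathrm o(e)=\Psi(e)(0)$, $\mathrm t(e)=\Psi(e)(1)$, $-e=\Psi^{-1}(\widetilde{\Psi(e)})$, $\mathbf E_x=\{e:\mathrm o(e)=x\}$, $\sigma_a(e)=\int_0^1\max\{p:H_{\Psi(e)}(t,p)=a\}dt$. Paths $\xi=(e_1,\dots,e_M)$,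 $M\ge1$, $\mathrm t(e_j)=\mathrm o(e_{j+1})$; $\sigma_a(\xi)=\sum\sigma_a(e_i)$; $S_a(x,y)=\inf\{\sigma_a(\xi):\xi$ path from $x$ to $y\}$. $(DFE_a)$ at $x$: $u(x)=\min_{e\in\mathbf E_x}(u(\mathrm t(e))+\sigma_a(-e))$; subsolution: $u(\mathrm t(e))-u(\mathrm o(e))\le\sigma_a(e)$ $\forall e$. $c=\min\{a\ge a_0:(DFE_a)$ has a subsolution$\}$. *)

(* Defs.v *)
From Stdlib Require Import Reals List ClassicalEpsilon.
Open Scope R_scope.

Definition in01 (s : R) : Prop := 0 <= s <= 1.

Definition is_max_of (P : R -> Prop) (m : R) : Prop := P m /\ forall x, P x -> x <= m.
Definition is_min_of (P : R -> Prop) (m : R) : Prop := P m /\ forall x, P x -> m <= x.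
Definition is_glb_of (P : R -> Prop) (m : R) : Prop :=
  (forall x, P x -> m <= x) /\ (forall m', (forall x, P x -> m' <= x) -> m' <= m).

(* max / min / inf of a set of reals (a default value 0 when it does not exist) *)
Definition Rmax_of (P : R -> Prop) : R :=
  match excluded_middle_informative (exists m, is_max_of P m) with
  | left h => proj1_sig (constructive_indefinite_description _ h)
  | right _ => 0 end.
Definition Rmin_of (P : R -> Prop) : R :=
  match excluded_middle_informative (exists m, is_min_of P m) with
  | left h => proj1_sig (constructive_indefinite_description _ h)
  | right _ => 0 end.
Definition Rinf_of (P : R -> Prop) : R :=
  match excluded_middle_informative (exists m, is_glb_of P m) with
  | left h => proj1_sig (constructive_indefinite_description _ h)
  | right _ => 0 end.

(* Riemann integral over [0,1] (default 0 if f is not Riemann integrable) *)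
Definition integral01 (f : R -> R) : R :=
  match excluded_middle_informative
          (exists v, exists pr : Riemann_integrable f 0 1, RiemannInt pr = v) with
  | left h => proj1_sig (constructive_indefinite_description _ h)
  | right _ => 0 end.

(* Edges E = arcs (via the bijection Psi), orig e = Psi(e)(0), term e = Psi(e)(1),
   rev e = -e, Ham e = H_{Psi(e)} (only its values for s in [0,1] matter). *)
Record network := {
  V : Type;
  E : Type;
  orig : E -> V;
  term : E -> V;
  rev : E -> E;
  Ham : E -> R -> R -> R }.

Arguments orig {n} e.
Arguments term {n} e.
Arguments rev {n} e.
Arguments Ham {n} e s p.

Definition finite_type (T : Type) : Prop := exists l : list T, forall x, In x l.

Fixpoint is_path {N : network} (l : list (E N)) (x y : V N) : Prop :=
  match l with
  | nil => False
  | e :: l' => orig e = x /\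
      match l' with
      | nil => term e = y
      | _ => is_path l' (term e) y
      end
  end.

Definition graph_assumptions (N : network) : Prop :=
  finite_type (E N) /\ finite_type (V N) /\
  (forall e : E N, orig (rev e) = term e /\ term (rev e) = orig e /\
                   rev (rev e) = e /\ rev e <> e) /\
  (forall x : V N, exists e : E N, orig e = x) /\
  (forall x y : V N, x <> y -> exists l, is_path l x y).

Definition ham_assumptions (N : network) : Prop :=
  forall e : E N,
  (forall s p, in01 s -> forall eps, 0 < eps -> exists del, 0 < del /\
     forall s' p', in01 s' -> Rabs (s' - s) < del -> Rabs (p' - p) < del ->
       Rabs (Ham e s' p' - Ham e s p) < eps) /\
  (forall M, exists K, forall s p, in01 s -> K < Rabs p -> M < Ham e s p) /\
  (forall s p q lam, in01 s -> 0 <= lam <= 1 ->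
     Ham e s (lam * p + (1 - lam) * q) <= Rmax (Ham e s p) (Ham e s q)) /\
  (forall s b p, in01 s ->
     ((exists del, 0 < del /\ forall q, Rabs (q - p) < del -> Ham e s q <= b)
      <-> Ham e s p < b)) /\
  (forall s p, in01 s -> Ham (rev e) s p = Ham e (1 - s) (- p)).

Definition is_minH {N : network} (e : E N) (s m : R) : Prop :=
  is_min_of (fun r => exists p, Ham e s p = r) m.

Definition periodic_visc_sub {N : network} (e : E N) (l : R) : Prop :=
  exists u : R -> R, continuity u /\ (forall s, u (s + 1) = u s) /\
    forall (phi phi' : R -> R) (s : R),
      (forall r, derivable_pt_lim phi r (phi' r)) -> continuity phi' ->
      0 < s < 1 ->
      (exists del, 0 < del /\ forall r, Rabs (r - s) < del -> u r - phi r <= u s - phi s) ->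
      Ham e s (phi' s) <= l.

(* b >= a_0 : b dominates max_s min_p H_e for non-closed arcs and
   b >= c_e = least level with a periodic subsolution for closed arcs *)
Definition above_a0 (N : network) (b : R) : Prop :=
  (forall e : E N, orig e <> term e ->
     forall s m, in01 s -> is_minH e s m -> m <= b) /\
  (forall e : E N, orig e = term e -> exists l, l <= b /\ periodic_visc_sub e l).

Definition is_a0 (N : network) (x : R) : Prop :=
  above_a0 N x /\ forall b, above_a0 N b -> x <= b.

Definition maxmin_eq {N : network} (e : E N) (x : R) : Prop :=
  is_max_of (fun r => exists s, in01 s /\ is_minH e s r) x.

Definition a0_flatness (N : network) : Prop :=
  forall x, is_a0 N x -> forall e : E N, maxmin_eq e x ->
    exists k, forall s, in01 s -> is_minH e s k.

Definition standing_assumptions (N : network) : Prop :=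
  graph_assumptions N /\ ham_assumptions N /\ a0_flatness N.

Definition sigma {N : network} (a : R) (e : E N) : R :=
  integral01 (fun t => Rmax_of (fun p => Ham e t p = a)).

Definition sigma_path {N : network} (a : R) (l : list (E N)) : R :=
  fold_right (fun e acc => sigma a e + acc) 0 l.

Definition S_a {N : network} (a : R) (x y : V N) : R :=
  Rinf_of (fun r => exists l, is_path l x y /\ r = sigma_path a l).

Definition DFE_at {N : network} (a : R) (u : V N -> R) (x : V N) : Prop :=
  u x = Rmin_of (fun r => exists e : E N, orig e = x /\ r = u (term e) + sigma a (rev e)).

Definition DFE_subsol {N : network} (a : R) (u : V N -> R) : Prop :=
  forall e : E N, u (term e) - u (orig e) <= sigma a e.

(* a > c, where c = min{ b >= a_0 : (DFE_b) has a subsolution } *)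
Definition above_crit (N : network) (a : R) : Prop :=
  exists b, above_a0 N b /\ b < a /\ exists w : V N -> R, DFE_subsol b w.

Definition v_ext {N : network} (a : R) (V' : V N -> Prop) (g : V N -> R) (x : V N) : R :=
  match excluded_middle_informative (V' x) with
  | left _ => g x
  | right _ => Rmin_of (fun r => exists y, V' y /\ r = g y + S_a a y x)
  end.

(* Main.v *)
Require Import Defs.
From Stdlib Require Import Reals.
From Stdlib Require Import Lra List Classical ClassicalEpsilon Lia.
Open Scope R_scope.
Import ListNotations.

Lemma Rmin_of_eq (P : R -> Prop) m : is_min_of P m -> Rmin_of P = m.
Proof.
  intros [H1 H2]. unfold Rmin_of.
  destruct excluded_middle_informative as [h|h].
  - destruct constructive_indefinite_description as [m' [H3 H4]]; simpl.
    apply Rle_antisym; auto.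
  - exfalso; apply h; exists m; split; auto.
Qed.

Lemma Rmax_of_eq (P : R -> Prop) m : is_max_of P m -> Rmax_of P = m.
Proof.
  intros [H1 H2]. unfold Rmax_of.
  destruct excluded_middle_informative as [h|h].
  - destruct constructive_indefinite_description as [m' [H3 H4]]; simpl.
    apply Rle_antisym; auto.
  - exfalso; apply h; exists m; split; auto.
Qed.

Lemma Rinf_of_eq (P : R -> Prop) m : is_glb_of P m -> Rinf_of P = m.
Proof.
  intros [H1 H2]. unfold Rinf_of.
  destruct excluded_middle_informative as [h|h].
  - destruct constructive_indefinite_description as [m' [H3 H4]]; simpl.
    apply Rle_antisym; auto.
  - exfalso; apply h; exists m; split; auto.
Qed.

Lemma glb_exists (P : R -> Prop) B : (exists x, P x) -> (forall x, P x -> B <= x) ->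
  exists m, is_glb_of P m.
Proof.
  intros [x0 Hx0] HB.
  destruct (completeness (fun y => P (- y))) as [m [Hm1 Hm2]].
  - exists (- B). intros y Hy. apply HB in Hy. lra.
  - exists (- x0). rewrite Ropp_involutive. auto.
  - exists (- m). split.
    + intros x Hx. assert (- x <= m). { apply Hm1. rewrite Ropp_involutive; auto. } lra.
    + intros m' Hm'. assert (m <= - m'). { apply Hm2. intros y Hy. apply Hm' in Hy. lra. } lra.
Qed.

Lemma finite_min {T} (l : list T) (P : T -> Prop) (f : T -> R) :
  (exists y, P y /\ In y l) -> exists y, P y /\ In y l /\ forall z, P z -> In z l -> f y <= f z.
Proof.
  induction l as [|a l IH]; intros [y [Py Iy]].
  - destruct Iy.
  - destruct (classic (exists y, P y /\ In y l)) as [Hex|Hno].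
    + destruct (IH Hex) as [y1 [P1 [I1 M1]]].
      destruct (classic (P a)) as [Pa|nPa].
      * destruct (Rle_dec (f a) (f y1)).
        -- exists a. split; [auto|split; [left; auto|]].
           intros z Pz [<-|Iz]; [lra|]. specialize (M1 z Pz Iz). lra.
        -- exists y1. split; [auto|split; [right; auto|]].
           intros z Pz [<-|Iz]; [lra|]. auto.
      * exists y1. split; [auto|split; [right; auto|]].
        intros z Pz [<-|Iz]; [contradiction|auto].
    + destruct Iy as [<-|Iy]; [|exfalso; apply Hno; eauto].
      exists a. split; [auto|split; [left; auto|]].
      intros z Pz [<-|Iz]; [lra|]. exfalso; apply Hno; eauto.
Qed.

Section Comb.
Variable N : network.
Variable s : E N -> R.

Fixpoint psum (l : list (E N)) : R :=
  match l with nil => 0 | e :: l' => s e + psum l' end.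

Lemma psum_snoc l f : psum (l ++ [f]) = psum l + s f.
Proof. induction l; simpl; lra. Qed.
End Comb.
Section Paths.
Variable N : network.

Lemma is_path_cons (e : E N) l (x y : V N) : l <> nil -> (is_path (e :: l) x y <-> orig e = x /\ is_path l (term e) y).
Proof. intros H. destruct l; [congruence|]. simpl. tauto. Qed.

Lemma is_path_snoc (l0 : list (E N)) f (x y : V N) : is_path (l0 ++ [f]) x y <->
  (l0 = nil /\ orig f = x /\ term f = y) \/ (l0 <> nil /\ is_path l0 x (orig f) /\ term f = y).
Proof.
  revert x. induction l0 as [|e l0 IH]; intros x.
  - simpl. split; [intros [? ?]; left; tauto|]. intros [H|[H _]]; [tauto|congruence].
  - simpl ((e :: l0) ++ [f]). rewrite is_path_cons by (destruct l0; simpl; congruence).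
    rewrite IH. destruct l0 as [|e' l0'].
    + simpl. split.
      * intros [H1 [[_ [H2 H3]]|[H2 _]]]; [|congruence]. right. split; [congruence|]. simpl. split; [split; congruence|auto].
      * intros [[H _]|[_ [[H1 H2] H3]]]; [congruence|]. split; auto.
    + split.
      * intros [H1 [[H2 _]|[_ [H2 H3]]]]; [discriminate|]. right. split; [congruence|].
        split; auto. apply is_path_cons; [congruence|]. auto.
      * intros [[H _]|[_ [H2 H3]]]; [congruence|].
        rewrite is_path_cons in H2 by congruence. destruct H2. split; auto. right.
        split; [congruence|]. auto.
Qed.

End Paths.

Lemma eps_cont (f : R -> R) x :
  (forall eps, 0 < eps -> exists del, 0 < del /\ forall y, Rabs (y - x) < del -> Rabs (f y - f x) < eps) ->
  continuity_pt f x.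
Proof.
  intros Hf. unfold continuity_pt, continue_in, limit1_in, limit_in. simpl. unfold R_dist.
  intros eps Heps. destruct (Hf eps Heps) as [del [Hd Hy]]. exists del. split; [lra|].
  intros y [_ Hy']. auto.
Qed.

Lemma abs_le_between p M : Rabs p <= M -> - M <= p <= M.
Proof. intros Hp. pose proof (Rle_abs p). pose proof (Rle_abs (- p)). rewrite Rabs_Ropp in *. lra. Qed.

Section Ana.
Variable H : R -> R -> R.
Hypothesis Hcont : forall s p, in01 s -> forall eps, 0 < eps -> exists del, 0 < del /\
     forall s' p', in01 s' -> Rabs (s' - s) < del -> Rabs (p' - p) < del ->
       Rabs (H s' p' - H s p) < eps.
Hypothesis Hcoer : forall M, exists K, forall s p, in01 s -> K < Rabs p -> M < H s p.
Hypothesis Hqc : forall s p q lam, in01 s -> 0 <= lam <= 1 ->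
     H s (lam * p + (1 - lam) * q) <= Rmax (H s p) (H s q).
Hypothesis Hint : forall s b p, in01 s ->
     ((exists del, 0 < del /\ forall q, Rabs (q - p) < del -> H s q <= b) <-> H s p < b).

Lemma contp t : in01 t -> continuity (fun p => H t p).
Proof.
  intros Ht x. apply eps_cont. intros eps Heps.
  destruct (Hcont t x Ht eps Heps) as [del [Hd Hc]]. exists del. split; auto.
  intros y Hy. apply Hc; auto. rewrite Rminus_diag, Rabs_R0. auto.
Qed.

Lemma above_big t c q : in01 t -> H t q <= c -> exists z, q < z /\ c < H t z.
Proof.
  intros Ht Hq. destruct (Hcoer c) as [K HK].
  exists (Rmax (Rabs q) (Rabs K) + 1). split.
  - pose proof (Rle_abs q). pose proof (Rmax_l (Rabs q) (Rabs K)). lra.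
  - apply HK; auto. pose proof (Rle_abs K). pose proof (Rmax_r (Rabs q) (Rabs K)).
    rewrite Rabs_right; [lra|]. pose proof (Rabs_pos q). pose proof (Rmax_l (Rabs q) (Rabs K)). lra.
Qed.

Lemma root_above t c q : in01 t -> H t q < c -> exists z, q < z /\ H t z = c.
Proof.
  intros Ht Hq. destruct (above_big t c q Ht (Rlt_le _ _ Hq)) as [z [Hz1 Hz2]].
  destruct (IVT (fun p => H t p - c) q z) as [r [Hr1 Hr2]].
  - intros x. apply continuity_pt_minus; [apply contp; auto|apply continuity_pt_const; intros ? ?; auto].
  - auto.
  - simpl. lra.
  - simpl. lra.
  - exists r. split; [|simpl in Hr2; lra].
    destruct Hr1 as [Hr1 _]. destruct (Rle_lt_or_eq_dec _ _ Hr1) as [|<-]; auto.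
    simpl in Hr2. lra.
Qed.

Lemma root_max t c m : in01 t -> H t m <= c ->
  exists P, is_max_of (fun p => H t p = c) P /\ (forall q, P < q -> c < H t q).
Proof.
  intros Ht Hm. destruct (Hcoer c) as [K HK].
  assert (Hb : forall p, H t p = c -> p <= K).
  { intros p Hp. destruct (Rle_dec p K) as [|n]; auto. exfalso.
    assert (c < H t p); [|lra]. apply HK; auto. pose proof (Rle_abs p). lra. }
  assert (Hne : exists p, H t p = c).
  { destruct (Rle_lt_or_eq_dec _ _ Hm) as [Hl|He]; [|eauto].
    destruct (root_above t c m Ht Hl) as [z [_ Hz]]. eauto. }
  destruct (completeness (fun p => H t p = c)) as [P [HP1 HP2]].
  { exists K. intros p Hp. apply Hb; auto. }
  { auto. }
  assert (HPc : H t P = c).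
  { destruct (Req_dec (H t P) c) as [|Hn]; auto. exfalso.
    assert (Heps : 0 < Rabs (H t P - c)) by (apply Rabs_pos_lt; lra).
    destruct (Hcont t P Ht _ Heps) as [del [Hd Hc]].
    assert (P <= P - del / 2); [|lra].
    apply HP2. intros p Hp. destruct (Rle_dec p (P - del / 2)) as [|n]; auto. exfalso.
    assert (p <= P) by (apply HP1; auto).
    assert (Rabs (H t p - H t P) < Rabs (H t P - c)).
    { apply Hc; auto. rewrite Rminus_diag, Rabs_R0; auto. rewrite Rabs_left1; lra. }
    rewrite Hp in H1. rewrite <- Rabs_Ropp in H1. replace (- (c - H t P)) with (H t P - c) in H1 by ring. lra. }
  exists P. split; [split; [auto|intros x Hx; apply HP1; auto]|].
  intros q Hq. destruct (Rlt_le_dec c (H t q)) as [|Hle]; auto. exfalso.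
  destruct (Rle_lt_or_eq_dec _ _ Hle) as [Hl|He].
  - destruct (root_above t c q Ht Hl) as [z [Hz1 Hz2]]. assert (z <= P) by (apply HP1; auto). lra.
  - assert (q <= P) by (apply HP1; auto). lra.
Qed.

Definition f_c (c t : R) := Rmax_of (fun p => H t p = c).

Lemma f_c_props t c m : in01 t -> H t m <= c ->
  H t (f_c c t) = c /\ (forall q, f_c c t < q -> c < H t q) /\ (forall q, H t q <= c -> q <= f_c c t).
Proof.
  intros Ht Hm. destruct (root_max t c m Ht Hm) as [P [HP1 HP2]].
  unfold f_c. rewrite (Rmax_of_eq _ _ HP1). split; [apply HP1|]. split; auto.
  intros q Hq. destruct (Rle_dec q P) as [|n]; auto. specialize (HP2 q). lra.
Qed.

Lemma f_c_strict t b a m : in01 t -> H t m <= b -> b < a -> f_c b t < f_c a t.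
Proof.
  intros Ht Hm Hab.
  destruct (f_c_props t b m Ht Hm) as [B1 [B2 B3]].
  destruct (f_c_props t a m Ht ltac:(lra)) as [A1 [A2 A3]].
  destruct (Rlt_le_dec (f_c b t) (f_c a t)) as [|Hle]; auto. exfalso.
  destruct (Rle_lt_or_eq_dec _ _ Hle) as [Hl|He].
  - specialize (A2 _ Hl). lra.
  - rewrite He in A1. lra.
Qed.


Lemma point_nbhd t0 c q0 : in01 t0 -> c < H t0 q0 ->
  exists d, 0 < d /\ forall t q, in01 t -> Rabs (t - t0) < d -> Rabs (q - q0) < d -> c < H t q.
Proof.
  intros Ht Hq. destruct (Hcont t0 q0 Ht (H t0 q0 - c) ltac:(lra)) as [d [Hd Hc]].
  exists d. split; auto. intros t q Ht' H1 H2. specialize (Hc t q Ht' H1 H2).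
  apply Rabs_def2 in Hc. lra.
Qed.

Lemma unif_U t0 c al be : in01 t0 -> (forall q, al <= q <= be -> c < H t0 q) ->
  exists del, 0 < del /\ forall t, in01 t -> Rabs (t - t0) < del -> forall q, al <= q <= be -> c < H t q.
Proof.
  intros Ht Hq. destruct (Rlt_le_dec be al) as [Hlt|Hle].
  { exists 1. split; [lra|]. intros. lra. }
  set (A := fun r => al <= r <= be /\ exists del, 0 < del /\
     forall t, in01 t -> Rabs (t - t0) < del -> forall q, al <= q <= r -> c < H t q).
  assert (Aal : A al).
  { split; [lra|]. destruct (point_nbhd t0 c al Ht (Hq al ltac:(lra))) as [d [Hd Hn]].
    exists d. split; auto. intros t Ht' Htd q Hq'. apply Hn; auto.
    replace (q - al) with 0 by lra. rewrite Rabs_R0; auto. }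
  destruct (completeness A) as [r [Hr1 Hr2]].
  { exists be. intros x [Hx _]. lra. }
  { exists al; auto. }
  assert (Hral : al <= r) by (apply Hr1; auto).
  assert (Hrbe : r <= be) by (apply Hr2; intros x [Hx _]; lra).
  destruct (point_nbhd t0 c r Ht (Hq r ltac:(lra))) as [d [Hd Hn]].
  assert (Hex : exists r1, A r1 /\ r - d < r1).
  { apply NNPP. intros Hno. assert (r <= r - d); [|lra]. apply Hr2. intros x Hx.
    destruct (Rle_dec x (r - d)) as [|n]; auto. exfalso. apply Hno. exists x. split; auto. lra. }
  destruct Hex as [r1 [[Hr1a [d1 [Hd1 Hn1]]] Hr1d]].
  assert (Hr1r : r1 <= r) by (apply Hr1; split; eauto).
  assert (Hnew : A (Rmin be (r + d / 2))).
  { split. { split; [apply Rmin_glb; lra|apply Rmin_l]. }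
    exists (Rmin d1 d). split; [apply Rmin_glb_lt; auto|].
    intros t Ht' Htd q Hq'.
    assert (Htd1 : Rabs (t - t0) < d1) by (pose proof (Rmin_l d1 d); lra).
    assert (Htd2 : Rabs (t - t0) < d) by (pose proof (Rmin_r d1 d); lra).
    destruct (Rle_dec q r1) as [Hq1|Hq1].
    - apply Hn1; auto. lra.
    - apply Hn; auto. pose proof (Rmin_r be (r + d / 2)). apply Rabs_def1; lra. }
  assert (Hm : Rmin be (r + d / 2) <= r) by (apply Hr1; auto).
  assert (Hbe : Rmin be (r + d / 2) = be).
  { unfold Rmin in *. destruct (Rle_dec be (r + d / 2)); lra. }
  rewrite Hbe in Hnew. destruct Hnew as [_ [del [Hdel Hdl]]]. exists del. split; auto.
Qed.

Lemma f_c_cont c : (forall t, in01 t -> exists m, H t m <= c) ->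
  forall t0, in01 t0 -> forall eps, 0 < eps -> exists del, 0 < del /\
    forall t, in01 t -> Rabs (t - t0) < del -> Rabs (f_c c t - f_c c t0) < eps.
Proof.
  intros L t0 Ht0 eps Heps.
  destruct (L t0 Ht0) as [m0 Hm0].
  destruct (f_c_props t0 c m0 Ht0 Hm0) as [P1 [P2 P3]].
  set (P := f_c c t0) in *.
  destruct (Hcoer c) as [K HK].
  destruct (unif_U t0 c (P + eps) K Ht0) as [d1 [Hd1 U1]].
  { intros q Hq. apply P2. lra. }
  assert (Hlow : exists d2, 0 < d2 /\ forall t, in01 t -> Rabs (t - t0) < d2 -> P - eps < f_c c t).
  { destruct (classic (exists q, P - eps < q < P /\ H t0 q < c)) as [[q [Hq1 Hq2]]|HB].
    - destruct (Hcont t0 q Ht0 (c - H t0 q) ltac:(lra)) as [d2 [Hd2 Hc2]].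
      exists d2. split; auto. intros t Ht Htd.
      assert (H t q < c).
      { specialize (Hc2 t q Ht Htd ltac:(rewrite Rminus_diag, Rabs_R0; auto)).
        apply Rabs_def2 in Hc2. lra. }
      destruct (L t Ht) as [mt Hmt]. destruct (f_c_props t c mt Ht Hmt) as [_ [_ T3]].
      specialize (T3 q ltac:(lra)). lra.
    - assert (HBq : forall q, - Rabs K - 1 <= q <= P - eps -> c < H t0 q).
      { intros q0 Hq0. apply Rnot_le_lt. intros Hle.
        apply HB. exists (P - eps / 2). split; [lra|].
        apply (proj1 (Hint t0 c (P - eps / 2) Ht0)). exists (eps / 2). split; [lra|].
        intros q Hq. apply Rabs_def2 in Hq.
        set (lam := (P - q) / (P - q0)).
        assert (Hlam : 0 <= lam <= 1).
        { unfold lam. split.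
          - unfold Rdiv. apply Rmult_le_pos; [lra|]. apply Rlt_le, Rinv_0_lt_compat; lra.
          - apply Rmult_le_reg_r with (P - q0); [lra|]. unfold Rdiv. rewrite Rmult_assoc, Rinv_l; lra. }
        replace q with (lam * q0 + (1 - lam) * P) by (unfold lam; field; lra).
        eapply Rle_trans; [apply Hqc; auto|]. apply Rmax_lub; lra. }
      destruct (unif_U t0 c (- Rabs K - 1) (P - eps) Ht0 HBq) as [d2 [Hd2 U2]].
      exists d2. split; auto. intros t Ht Htd.
      destruct (L t Ht) as [mt Hmt]. destruct (f_c_props t c mt Ht Hmt) as [T1 _].
      apply Rnot_le_lt. intros Hle.
      destruct (Rle_dec (- Rabs K - 1) (f_c c t)) as [Hge|Hlt].
      + specialize (U2 t Ht Htd (f_c c t) ltac:(lra)). lra.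
      + assert (c < H t (f_c c t)); [|lra]. apply HK; auto.
        rewrite Rabs_left by (pose proof (Rabs_pos K); lra). pose proof (Rle_abs K). lra. }
  destruct Hlow as [d2 [Hd2 Hlow]].
  exists (Rmin d1 d2). split; [apply Rmin_glb_lt; auto|].
  intros t Ht Htd.
  assert (Htd1 : Rabs (t - t0) < d1) by (pose proof (Rmin_l d1 d2); lra).
  assert (Htd2 : Rabs (t - t0) < d2) by (pose proof (Rmin_r d1 d2); lra).
  specialize (Hlow t Ht Htd2).
  destruct (L t Ht) as [mt Hmt]. destruct (f_c_props t c mt Ht Hmt) as [T1 _].
  assert (f_c c t < P + eps).
  { apply Rnot_le_lt. intros Hle. destruct (Rle_dec (f_c c t) K) as [HK'|HK'].
    - specialize (U1 t Ht Htd1 (f_c c t) ltac:(lra)). lra.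
    - assert (c < H t (f_c c t)); [|lra]. apply HK; auto. pose proof (Rle_abs (f_c c t)). lra. }
  apply Rabs_def1; lra.
Qed.


Definition clamp (t : R) := Rmax 0 (Rmin 1 t).

Lemma clamp_in t : in01 (clamp t).
Proof. unfold clamp, in01, Rmax, Rmin. repeat destruct Rle_dec; lra. Qed.

Lemma clamp_id t : in01 t -> clamp t = t.
Proof. unfold clamp, in01, Rmax, Rmin. intros. repeat destruct Rle_dec; lra. Qed.

Lemma clamp_lip x y : Rabs (clamp y - clamp x) <= Rabs (y - x).
Proof.
  unfold clamp, Rmax, Rmin. repeat destruct Rle_dec;
  unfold Rabs; repeat destruct Rcase_abs; lra.
Qed.

Definition Fc c t := f_c c (clamp t).

Lemma Fc_cont c : (forall t, in01 t -> exists m, H t m <= c) -> forall x, continuity_pt (Fc c) x.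
Proof.
  intros L x. apply eps_cont. intros eps Heps.
  destruct (f_c_cont c L (clamp x) (clamp_in x) eps Heps) as [del [Hd Hc]].
  exists del. split; auto. intros y Hy. unfold Fc. apply Hc; [apply clamp_in|].
  pose proof (clamp_lip x y). lra.
Qed.

Lemma Fc_int c : (forall t, in01 t -> exists m, H t m <= c) -> Riemann_integrable (Fc c) 0 1.
Proof.
  intros L. apply continuity_implies_RiemannInt; [lra|]. intros. apply Fc_cont; auto.
Qed.

Lemma integral01_Fc c (L : forall t, in01 t -> exists m, H t m <= c) :
  integral01 (f_c c) = RiemannInt (Fc_int c L).
Proof.
  unfold integral01. destruct excluded_middle_informative as [h|h].
  - destruct constructive_indefinite_description as [v [pr Hv]]. simpl. rewrite <- Hv.
    apply RiemannInt_P18; [lra|]. intros x Hx. unfold Fc. rewrite clamp_id; auto. unfold in01; lra.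
  - exfalso. apply h. exists (RiemannInt (Fc_int c L)).
    assert (pr : Riemann_integrable (f_c c) 0 1).
    { apply (Riemann_integrable_ext (f := Fc c) (f_c c)); [|apply Fc_int; auto].
      intros x Hx. unfold Fc. rewrite clamp_id; auto. unfold in01.
      rewrite Rmin_left, Rmax_right in Hx by lra. lra. }
    exists pr. apply RiemannInt_P18; [lra|]. intros x Hx. unfold Fc. rewrite clamp_id; auto. unfold in01; lra.
Qed.

Lemma strict_int b a : (forall t, in01 t -> exists m, H t m <= b) -> b < a ->
  integral01 (f_c b) < integral01 (f_c a).
Proof.
  intros Lb Hab.
  assert (La : forall t, in01 t -> exists m, H t m <= a).
  { intros t Ht. destruct (Lb t Ht) as [m Hm]. exists m. lra. }
  rewrite (integral01_Fc b Lb), (integral01_Fc a La).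
  set (G := fun x => Fc a x + (-1) * Fc b x).
  assert (HG : forall x, continuity_pt G x).
  { intros x. apply eps_cont. intros eps Heps.
    pose proof (Fc_cont a La x) as C1. pose proof (Fc_cont b Lb x) as C2.
    unfold continuity_pt, continue_in, limit1_in, limit_in in C1, C2. simpl in C1, C2. unfold R_dist in C1, C2.
    destruct (C1 (eps / 2) ltac:(lra)) as [d1 [Hd1 E1]].
    destruct (C2 (eps / 2) ltac:(lra)) as [d2 [Hd2 E2]].
    exists (Rmin d1 d2). split; [apply Rmin_glb_lt; auto|]. intros y Hy.
    assert (A1 : Rabs (Fc a y - Fc a x) < eps / 2).
    { destruct (Req_dec y x) as [->|Hne]; [rewrite Rminus_diag, Rabs_R0; lra|]. apply E1. split; [split; [exact I|auto]|]. pose proof (Rmin_l d1 d2); lra. }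
    assert (A2 : Rabs (Fc b y - Fc b x) < eps / 2).
    { destruct (Req_dec y x) as [->|Hne]; [rewrite Rminus_diag, Rabs_R0; lra|]. apply E2. split; [split; [exact I|auto]|]. pose proof (Rmin_r d1 d2); lra. }
    unfold G. apply Rabs_def2 in A1. apply Rabs_def2 in A2. apply Rabs_def1; lra. }
  destruct (continuity_ab_min G 0 1 ltac:(lra) (fun c _ => HG c)) as [mx [Hmx1 Hmx2]].
  assert (Hpos : 0 < G mx).
  { unfold G, Fc. destruct (Lb (clamp mx) (clamp_in mx)) as [m Hm].
    pose proof (f_c_strict (clamp mx) b a m (clamp_in mx) Hm Hab). lra. }
  pose (prG := RiemannInt_P10 (-1) (Fc_int a La) (Fc_int b Lb)).
  pose proof (RiemannInt_P13 (Fc_int a La) (Fc_int b Lb) prG) as E.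
  pose proof (RiemannInt_P14 0 1 (G mx)) as prC.
  pose proof (RiemannInt_P15 prC) as EC.
  pose proof (RiemannInt_P19 prC prG ltac:(lra)) as B.
  assert (RiemannInt prC <= RiemannInt prG).
  { apply B. intros x Hx. unfold fct_cte. apply Hmx1. lra. }
  unfold G in E. lra.
Qed.

Lemma min_exists t : in01 t -> exists mx, forall p, H t mx <= H t p.
Proof.
  intros Ht. destruct (Hcoer (H t 0)) as [K HK].
  destruct (continuity_ab_min (fun p => H t p) (- Rabs K - 1) (Rabs K + 1)) as [mx [Hm1 Hm2]].
  { pose proof (Rabs_pos K). lra. }
  { intros c _. apply contp; auto. }
  exists mx. intros p. destruct (Rle_dec (Rabs p) (Rabs K + 1)) as [Hp|Hp].
  - apply Hm1. apply abs_le_between in Hp. lra.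
  - assert (H t 0 < H t p). { apply HK; auto. pose proof (Rle_abs K). lra. }
    assert (H t mx <= H t 0). { apply Hm1. pose proof (Rabs_pos K). lra. }
    lra.
Qed.

Lemma visc_step1 l (u : R -> R) : continuity u ->
  (forall (phi phi' : R -> R) (s : R),
      (forall r, derivable_pt_lim phi r (phi' r)) -> continuity phi' ->
      0 < s < 1 ->
      (exists del, 0 < del /\ forall r, Rabs (r - s) < del -> u r - phi r <= u s - phi s) ->
      H s (phi' s) <= l) ->
  forall t', 0 < t' < 1 -> forall del, 0 < del -> exists s, 0 < s < 1 /\ Rabs (s - t') < del /\ exists p, H s p <= l.
Proof.
  intros Hu Hv t' Ht' del Hdel.
  set (d := Rmin del (Rmin t' (1 - t')) / 2).
  assert (Hd : 0 < d /\ d < del /\ d < t' /\ d < 1 - t').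
  { unfold d. pose proof (Rmin_l del (Rmin t' (1 - t'))). pose proof (Rmin_r del (Rmin t' (1 - t'))).
    pose proof (Rmin_l t' (1 - t')). pose proof (Rmin_r t' (1 - t')).
    assert (0 < Rmin del (Rmin t' (1 - t'))) by (repeat apply Rmin_glb_lt; lra). lra. }
  set (lo := t' - d). set (hi := t' + d).
  set (k := (Rabs (u lo - u t') + Rabs (u hi - u t') + 1) / (d * d)).
  set (phi := fun r => k * ((r - t') * (r - t'))).
  set (phi' := fun r => k * (2 * (r - t'))).
  assert (Dphi : forall r, derivable_pt_lim phi r (phi' r)).
  { intros r. unfold phi, phi'.
    replace (k * (2 * (r - t'))) with (k * ((1 - 0) * (r - t') + (r - t') * (1 - 0))) by ring.
    apply (derivable_pt_lim_scal (fun r => (r - t') * (r - t')) k r).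
    apply (derivable_pt_lim_mult (fun r => r - t') (fun r => r - t')).
    - apply (derivable_pt_lim_minus id (fct_cte t')); [apply derivable_pt_lim_id|apply derivable_pt_lim_const].
    - apply (derivable_pt_lim_minus id (fct_cte t')); [apply derivable_pt_lim_id|apply derivable_pt_lim_const]. }
  assert (Cphi' : continuity phi').
  { intros r. apply derivable_continuous_pt. exists (k * (2 * (1 - 0))). unfold phi'.
    apply (derivable_pt_lim_scal (fun r => 2 * (r - t')) k r).
    apply (derivable_pt_lim_scal (fun r => r - t') 2 r).
    apply (derivable_pt_lim_minus id (fct_cte t')); [apply derivable_pt_lim_id|apply derivable_pt_lim_const]. }
  assert (Cphi : forall r, continuity_pt phi r).
  { intros r. apply derivable_continuous_pt. exact (exist _ (phi' r) (Dphi r)). }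
  destruct (continuity_ab_maj (fun r => u r - phi r) lo hi) as [s [Hs1 Hs2]].
  { unfold lo, hi; lra. }
  { intros c _. apply (continuity_pt_minus u phi); auto. }
  assert (Hk : k * (d * d) = Rabs (u lo - u t') + Rabs (u hi - u t') + 1).
  { unfold k. field. lra. }
  assert (Hst : u t' <= u s - phi s).
  { pose proof (Hs1 t' ltac:(unfold lo, hi; lra)). unfold phi in H0 |- *.
    replace (t' - t') with 0 in H0 by ring. lra. }
  assert (Hlo : u lo - phi lo < u t').
  { unfold phi. replace ((lo - t') * (lo - t')) with (d * d) by (unfold lo; ring). rewrite Hk.
    pose proof (Rle_abs (u lo - u t')). pose proof (Rabs_pos (u hi - u t')). lra. }
  assert (Hhi : u hi - phi hi < u t').
  { unfold phi. replace ((hi - t') * (hi - t')) with (d * d) by (unfold hi; ring). rewrite Hk.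
    pose proof (Rle_abs (u hi - u t')). pose proof (Rabs_pos (u lo - u t')). lra. }
  assert (Hs3 : lo < s < hi).
  { split.
    - destruct (Rle_lt_or_eq_dec _ _ (proj1 Hs2)) as [|He]; auto. rewrite <- He in Hst. lra.
    - destruct (Rle_lt_or_eq_dec _ _ (proj2 Hs2)) as [|He]; auto. rewrite He in Hst. lra. }
  exists s. split; [unfold lo, hi in Hs3; lra|]. split.
  { apply Rabs_def1; unfold lo, hi in Hs3; lra. }
  exists (phi' s). apply (Hv phi phi' s Dphi Cphi'); [unfold lo, hi in Hs3; lra|].
  exists (Rmin (s - lo) (hi - s)). split; [apply Rmin_glb_lt; lra|].
  intros r Hr. apply Hs1. apply Rabs_def2 in Hr.
  pose proof (Rmin_l (s - lo) (hi - s)). pose proof (Rmin_r (s - lo) (hi - s)). lra.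
Qed.

Lemma visc_level l (u : R -> R) : continuity u ->
  (forall (phi phi' : R -> R) (s : R),
      (forall r, derivable_pt_lim phi r (phi' r)) -> continuity phi' ->
      0 < s < 1 ->
      (exists del, 0 < del /\ forall r, Rabs (r - s) < del -> u r - phi r <= u s - phi s) ->
      H s (phi' s) <= l) ->
  forall t, in01 t -> exists m, H t m <= l.
Proof.
  intros Hu Hv t0 Ht0. apply NNPP. intros Hno.
  assert (Hall : forall m, l < H t0 m).
  { intros m. apply Rnot_le_lt. intros Hle. apply Hno. eauto. }
  destruct (Hcoer l) as [K HK].
  destruct (unif_U t0 l (- Rabs K - 1) (Rabs K + 1) Ht0) as [del [Hdel U]].
  { intros q _. auto. }
  set (th := Rmin 1 del / 2).
  assert (Hth : 0 < th /\ th <= 1 / 2 /\ th <= del / 2).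
  { unfold th. pose proof (Rmin_l 1 del). pose proof (Rmin_r 1 del).
    assert (0 < Rmin 1 del) by (apply Rmin_glb_lt; lra). lra. }
  set (t' := (1 - th) * t0 + th / 2).
  unfold in01 in Ht0.
  assert (Ht' : 0 < t' < 1) by (unfold t'; nra).
  assert (Htt : Rabs (t' - t0) <= th / 2) by (apply Rabs_le; unfold t'; nra).
  destruct (visc_step1 l u Hu Hv t' Ht' (del - th / 2) ltac:(lra)) as [s [Hs1 [Hs2 [p Hp]]]].
  assert (Hsd : Rabs (s - t0) < del).
  { replace (s - t0) with ((s - t') + (t' - t0)) by ring.
    pose proof (Rabs_triang (s - t') (t' - t0)). lra. }
  assert (Hs01 : in01 s) by (unfold in01; lra).
  destruct (Rle_dec (Rabs p) (Rabs K + 1)) as [Hp'|Hp'].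
  - assert (l < H s p); [|lra]. apply U; auto. apply abs_le_between in Hp'. lra.
  - assert (l < H s p); [|lra]. apply HK; auto. pose proof (Rle_abs K). lra.
Qed.
End Ana.

Section Main.
Variable N : network.
Variable a : R.
Notation s := (@Defs.sigma N a).
Notation S := (@S_a N a).
Hypothesis HfinV : finite_type (V N).
Hypothesis HfinE : finite_type (E N).
Hypothesis Hrev : forall e : E N, orig (Defs.rev e) = term e /\ term (Defs.rev e) = orig e /\ Defs.rev (Defs.rev e) = e.
Hypothesis Hout : forall x : V N, exists e : E N, orig e = x.
Hypothesis Hconn : forall x y : V N, x <> y -> exists l, is_path l x y.
Variable w : V N -> R.
Hypothesis Hw : forall e : E N, w (term e) - w (orig e) < s e.

Lemma sp_psum l : sigma_path a l = psum N s l.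
Proof. induction l; simpl; [reflexivity|]. rewrite IHl. reflexivity. Qed.

Lemma path_lower l : forall x y : V N, is_path l x y -> w y - w x < psum N s l.
Proof.
  induction l as [|e l IH]; intros x y Hp; [destruct Hp|].
  destruct l as [|e' l'].
  - simpl in Hp. destruct Hp as [H1 H2]. subst. simpl. specialize (Hw e). lra.
  - rewrite is_path_cons in Hp by congruence. destruct Hp as [H1 H2].
    specialize (IH _ _ H2). subst. change (psum N s (e :: e' :: l')) with (s e + psum N s (e' :: l')).
    specialize (Hw e). lra.
Qed.

Lemma path_exists (x y : V N) : exists l, is_path l x y.
Proof.
  destruct (classic (x = y)) as [<-|H]; [|auto].
  destruct (Hout x) as [e He]. exists [e; Defs.rev e]. simpl.
  destruct (Hrev e) as [H1 [H2 _]]. repeat split; auto; congruence.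
Qed.

Lemma S_glb (x y : V N) : is_glb_of (fun r => exists l, is_path l x y /\ r = sigma_path a l) (S x y).
Proof.
  assert (exists m, is_glb_of (fun r => exists l, is_path l x y /\ r = sigma_path a l) m) as [m Hm].
  { apply glb_exists with (B := w y - w x).
    - destruct (path_exists x y) as [l Hl]. eauto.
    - intros r [l [Hl ->]]. rewrite sp_psum. apply Rlt_le, path_lower; auto. }
  unfold S_a. rewrite (Rinf_of_eq _ _ Hm). auto.
Qed.

Lemma S_le_path l (x y : V N) : is_path l x y -> S x y <= psum N s l.
Proof. intros Hl. destruct (S_glb x y) as [H _]. rewrite <- sp_psum. apply H. eauto. Qed.

Lemma S_ge_lb m (x y : V N) : (forall l, is_path l x y -> m <= psum N s l) -> m <= S x y.
Proof.
  intros Hm. destruct (S_glb x y) as [_ H]. apply H. intros r [l [Hl ->]].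
  rewrite sp_psum. auto.
Qed.

Lemma S_triangle (e : E N) (x : V N) : S x (term e) <= S x (orig e) + s e.
Proof.
  assert (S x (term e) - s e <= S x (orig e)); [|lra].
  apply S_ge_lb. intros l Hl.
  assert (S x (term e) <= psum N s (l ++ [e])); [|rewrite psum_snoc in H; lra].
  apply S_le_path. apply (proj2 (is_path_snoc _ _ _ _ _)). right. split; [destruct l; [simpl in Hl; contradiction|congruence]|auto].
Qed.

Lemma S_edge (e : E N) : S (orig e) (term e) <= s e.
Proof.
  assert (S (orig e) (term e) <= psum N s [e]) by (apply S_le_path; simpl; auto).
  simpl in H. lra.
Qed.

Variable V' : V N -> Prop.
Variable g : V N -> R.
Hypothesis Hg : forall x y, V' x -> V' y -> g x - g y <= S y x.
Notation v := (v_ext a V' g).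
Hypothesis HV' : exists x, V' x.

Lemma v_in (x : V N) : V' x -> v x = g x.
Proof. intros H. unfold v_ext. destruct excluded_middle_informative; [auto|contradiction]. Qed.

Lemma v_out (x : V N) : ~ V' x -> (exists y, V' y /\ v x = g y + S y x) /\ (forall y, V' y -> v x <= g y + S y x).
Proof.
  intros H.
  destruct HfinV as [lV HlV].
  destruct (finite_min lV V' (fun y => g y + S y x)) as [y [Py [_ My]]].
  { destruct HV' as [y Hy]. exists y; auto. }
  assert (Hm : is_min_of (fun r => exists y, V' y /\ r = g y + S y x) (g y + S y x)).
  { split; eauto. intros r [z [Hz ->]]. apply My; auto. }
  unfold v_ext. destruct excluded_middle_informative; [contradiction|].
  rewrite (Rmin_of_eq _ _ Hm). split; eauto.
Qed.

Lemma v_le (x y : V N) : V' y -> v x <= g y + S y x.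
Proof.
  intros Hy. destruct (classic (V' x)) as [Hx|Hx].
  - rewrite v_in by auto. specialize (Hg x y Hx Hy). lra.
  - apply (v_out x Hx); auto.
Qed.

Lemma v_cases (x : V N) : (V' x /\ v x = g x) \/ (exists y, V' y /\ v x = g y + S y x).
Proof.
  destruct (classic (V' x)) as [Hx|Hx].
  - left. split; auto. apply v_in; auto.
  - right. apply (v_out x Hx).
Qed.

Lemma v_subsol : DFE_subsol a v.
Proof.
  intros e. destruct (v_cases (orig e)) as [[Ho Hvo]|[y [Hy Hvo]]].
  - pose proof (v_le (term e) (orig e) Ho). pose proof (S_edge e). lra.
  - pose proof (v_le (term e) y Hy). pose proof (S_triangle e y). lra.
Qed.

Lemma last_dec (l : list (E N)) (x y : V N) : is_path l x y ->
  exists l0 f, l = l0 ++ [f] /\ ((l0 = nil /\ orig f = x /\ term f = y) \/ (l0 <> nil /\ is_path l0 x (orig f) /\ term f = y)).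
Proof.
  intros Hl. destruct l as [|e l]; [simpl in Hl; contradiction|].
  destruct (exists_last (l := e :: l) ltac:(congruence)) as [l0 [f Hf]].
  exists l0, f. split; auto. apply is_path_snoc. rewrite <- Hf. auto.
Qed.

Lemma min_edges (x : V N) (F : E N -> R) : exists e0, orig e0 = x /\ forall e, orig e = x -> F e0 <= F e.
Proof.
  destruct HfinE as [lE HlE].
  destruct (finite_min lE (fun e => orig e = x) F) as [e0 [P0 [_ M0]]].
  { destruct (Hout x) as [e He]. exists e; auto. }
  exists e0. split; auto.
Qed.

Lemma v_DFE (x : V N) : ~ V' x -> DFE_at a v x.
Proof.
  intros Hx. unfold DFE_at.
  destruct (min_edges x (fun e => v (term e) + s (Defs.rev e))) as [e0 [He0 M0]].
  assert (Hlow : forall e, orig e = x -> v x <= v (term e) + s (Defs.rev e)).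
  { intros e He. pose proof (v_subsol (Defs.rev e)). destruct (Hrev e) as [H1 [H2 _]].
    rewrite H1, H2, He in H. lra. }
  assert (Heq : v x = v (term e0) + s (Defs.rev e0)).
  { apply Rle_antisym; [apply Hlow; auto|].
    destruct (v_out x Hx) as [[y [Hy Hvx]] _]. rewrite Hvx.
    assert (v (term e0) + s (Defs.rev e0) - g y <= S y x); [|lra].
    apply S_ge_lb. intros l Hl.
    destruct (last_dec l y x Hl) as [l0 [f [-> Hc]]]. rewrite psum_snoc.
    assert (Hm : v (term e0) + s (Defs.rev e0) <= v (orig f) + s f).
    { destruct (Hrev f) as [H1 [H2 H3]].
      pose proof (M0 (Defs.rev f)). rewrite H2, H3 in H. apply H.
      rewrite H1. destruct Hc as [[_ [_ Ht]]|[_ [_ Ht]]]; auto. }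
    destruct Hc as [[-> [Ho _]]|[_ [Hp _]]].
    + simpl. rewrite Ho in Hm. rewrite (v_in y Hy) in Hm. lra.
    + pose proof (v_le (orig f) y Hy). pose proof (S_le_path l0 y (orig f) Hp). lra. }
  symmetry. apply Rmin_of_eq. split.
  - exists e0. split; auto.
  - intros r [e [He ->]]. apply Hlow; auto.
Qed.


Lemma filter_len_le {T} (p q : T -> bool) (l : list T) :
  (forall z, p z = true -> q z = true) -> (length (filter p l) <= length (filter q l))%nat.
Proof.
  intros Hpq. induction l as [|z l IH]; simpl; [lia|].
  destruct (p z) eqn:E1; [rewrite (Hpq z E1); simpl; lia|].
  destruct (q z); simpl; lia.
Qed.

Lemma filter_len_lt {T} (p q : T -> bool) (l : list T) (z0 : T) :
  (forall z, p z = true -> q z = true) -> In z0 l -> p z0 = false -> q z0 = true ->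
  (length (filter p l) < length (filter q l))%nat.
Proof.
  intros Hpq Hin Hp Hq. induction l as [|z l IH]; [destruct Hin|].
  destruct Hin as [<-|Hin].
  - simpl. rewrite Hp, Hq. simpl. pose proof (filter_len_le p q l Hpq). lia.
  - simpl. specialize (IH Hin).
    destruct (p z) eqn:E1; [rewrite (Hpq z E1); simpl; lia|].
    destruct (q z); simpl; lia.
Qed.

Section Uniq.
Variable u : V N -> R.
Hypothesis HuV : forall x, V' x -> u x = g x.
Hypothesis HuD : forall x, ~ V' x -> DFE_at a u x.

Lemma u_DFE (x : V N) : ~ V' x ->
  (exists e0, orig e0 = x /\ u x = u (term e0) + s (Defs.rev e0)) /\
  (forall e, orig e = x -> u x <= u (term e) + s (Defs.rev e)).
Proof.
  intros Hx. specialize (HuD x Hx). unfold DFE_at in HuD.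
  destruct (min_edges x (fun e => u (term e) + s (Defs.rev e))) as [e0 [He0 M0]].
  rewrite (Rmin_of_eq _ (u (term e0) + s (Defs.rev e0))) in HuD.
  - split; [exists e0; auto|]. intros e He. rewrite HuD. apply M0; auto.
  - split; [exists e0; auto|]. intros r [e [He ->]]. apply M0; auto.
Qed.

Lemma u_le_v (x : V N) : u x <= v x.
Proof.
  destruct (classic (V' x)) as [Hx|Hx].
  - rewrite HuV, v_in; auto. lra.
  - destruct (v_out x Hx) as [[y [Hy ->]] _].
    assert (u x - g y <= S y x); [|lra].
    apply S_ge_lb.
    assert (forall l z, is_path l y z -> u z <= g y + psum N s l); [|intros l Hl; specialize (H l x Hl); lra].
    intros l. induction l as [|f l0 IH] using rev_ind; intros z Hl; [simpl in Hl; contradiction|].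
    rewrite psum_snoc. apply is_path_snoc in Hl.
    assert (Hz : term f = z) by (destruct Hl as [[_ [_ H]]|[_ [_ H]]]; auto).
    destruct (classic (V' z)) as [Hvz|Hvz].
    + rewrite HuV by auto. pose proof (Hg z y Hvz Hy). pose proof (S_le_path (l0 ++ [f]) y z).
      rewrite psum_snoc in H0. apply is_path_snoc in Hl. specialize (H0 Hl). lra.
    + destruct (u_DFE z Hvz) as [_ Hle]. destruct (Hrev f) as [H1 [H2 H3]].
      specialize (Hle (Defs.rev f)). rewrite H1, H2, H3 in Hle. specialize (Hle Hz).
      destruct Hl as [[-> [Ho _]]|[_ [Hp _]]].
      * simpl. rewrite Ho in Hle. rewrite (HuV y Hy) in Hle. lra.
      * specialize (IH _ Hp). lra.
Qed.

Definition phi (x : V N) := u x - w x.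

Lemma v_le_u (x : V N) : v x <= u x.
Proof.
  destruct (classic (V' x)) as [Hx|Hx]; [rewrite HuV, v_in; auto; lra|].
  destruct HfinV as [lV HlV].
  set (meas := fun x : V N => length (filter (fun z => if Rlt_dec (phi z) (phi x) then true else false) lV)).
  assert (Hmain : forall n x, (meas x < n)%nat -> ~ V' x ->
     exists y l, V' y /\ is_path l y x /\ g y + psum N s l <= u x).
  { induction n as [|n IH]; intros x0 Hn Hx0; [lia|].
    destruct (u_DFE x0 Hx0) as [[e0 [He0 Hu0]] _].
    set (x1 := term e0) in *. set (f := Defs.rev e0) in *.
    destruct (Hrev e0) as [H1 [H2 H3]].
    assert (Hf1 : orig f = x1) by auto. assert (Hf2 : term f = x0) by (unfold f; congruence).
    assert (Hphi : phi x1 < phi x0).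
    { unfold phi. pose proof (Hw f) as Hwf. rewrite Hf1, Hf2 in Hwf. lra. }
    destruct (classic (V' x1)) as [Hv1|Hv1].
    - exists x1, [f]. split; auto. split; [simpl; auto|]. simpl. rewrite <- HuV by auto.
      lra.
    - assert (Hlt : (meas x1 < meas x0)%nat).
      { unfold meas. apply filter_len_lt with (z0 := x1); auto.
        - intros z. destruct (Rlt_dec (phi z) (phi x1)), (Rlt_dec (phi z) (phi x0)); auto; lra.
        - destruct (Rlt_dec (phi x1) (phi x1)); auto; lra.
        - destruct (Rlt_dec (phi x1) (phi x0)); auto; lra. }
      destruct (IH x1 ltac:(lia) Hv1) as [y [l [Hy [Hl Hle]]]].
      exists y, (l ++ [f]). split; auto. split.
      + apply is_path_snoc. right. split; [destruct l; [simpl in Hl; contradiction|congruence]|].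
        rewrite Hf1. auto.
      + rewrite psum_snoc. lra. }
  destruct (Hmain (Datatypes.S (meas x)) x ltac:(lia) Hx) as [y [l [Hy [Hl Hle]]]].
  pose proof (v_le x y Hy). pose proof (S_le_path l y x Hl). lra.
Qed.

End Uniq.
End Main.

Theorem theorem6p24 (N : network) (HN : standing_assumptions N) (a : R)
  (Ha : above_crit N a) (V' : V N -> Prop) (HV' : exists x, V' x) (g : V N -> R)
  (Hg : forall x y, V' x -> V' y -> g x - g y <= S_a a y x) :
  (forall x, V' x -> v_ext a V' g x = g x) /\
  (forall x, ~ V' x -> DFE_at a (v_ext a V' g) x) /\
  (forall u : V N -> R, (forall x, V' x -> u x = g x) ->
     (forall x, ~ V' x -> DFE_at a u x) -> forall x, u x = v_ext a V' g x) /\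
  DFE_subsol a (v_ext a V' g).
Proof.
  destruct HN as [[HfE [HfV [Hrev0 [Hout Hconn]]]] [Hham _]].
  destruct Ha as [b [Hab0 [Hba [w Hw]]]].
  assert (Hrev : forall e : E N, orig (Defs.rev e) = term e /\ term (Defs.rev e) = orig e /\ Defs.rev (Defs.rev e) = e).
  { intros e. destruct (Hrev0 e) as [A [B [C _]]]. auto. }
  assert (Hsig : forall e : E N, Defs.sigma b e < Defs.sigma a e).
  { intros e. destruct (Hham e) as [Hc [Hco [Hq [Hi _]]]].
    assert (L : forall t, in01 t -> exists m, Ham e t m <= b).
    { intros t Ht. destruct (classic (orig e = term e)) as [Hcl|Hncl].
      - destruct (proj2 Hab0 e Hcl) as [l [Hlb [u [Hu [_ Hv]]]]].
        destruct (visc_level (Ham e) Hc Hco l u Hu Hv t Ht) as [m Hm]. exists m. lra.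
      - destruct (min_exists (Ham e) Hc Hco t Ht) as [mx Hmx].
        exists mx. apply (proj1 Hab0 e Hncl t); auto.
        split; [exists mx; auto|]. intros r [p <-]. apply Hmx. }
    exact (strict_int (Ham e) Hc Hco Hq Hi b a L Hba). }
  assert (Hw' : forall e : E N, w (term e) - w (orig e) < Defs.sigma a e).
  { intros e. specialize (Hw e). specialize (Hsig e). lra. }
  split; [|split; [|split]].
  - intros x Hx. eapply v_in; eauto.
  - intros x Hx. eapply v_DFE; eauto.
  - intros u HuV HuD x. apply Rle_antisym.
    + eapply u_le_v; eauto.
    + eapply v_le_u; eauto.
  - eapply v_subsol; eauto.
Qed.
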